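(* The Ewens distribution $p^\star$, $p^\star_N(\pi)=\frac{\prod_{B\in\pi}(b-1)!}{n!}$, is the unique random partition $p$ that generates the potential for TU games and satisfies conditional independence.
   Context: $\mathbf{U}$ is a finite set of players; cardinalities of $N,S,B$ are $n,s,b$. $\Pi(N)$ is the set of partitions of $N$ ($\Pi(\emptyset)=\{\emptyset\}$). A random partition is $p=(p_N)_{N\subseteq\mathbf{U}}$ with $p_N$ a probability distribution on $\Pi(N)$. A TU game on $N$ is $v:2^N\to\mathbb{R}$ with $v(\emptyset)=0$. The potential for TU games is $\mathrm{Pot}(v)=\sum_{\emptyset\ne S\subseteq N}\frac{(s-1)!(n-s)!}{n!}v(S)$ (the unique map vanishing on the empty game with $\sum_{i\in N}[\mathrm{Pot}(v)-\mathrm{Pot}(v|_{2^{N\setminus\{i\}}})]=v(N)$). $p$ generates the potential for TU games if $\sum_{\pi\in\Pi(N)}p_N(\pi)\sum_{B\in\pi}v(B)=\mathrm{Pot}(v)$ for all $N\subseteq\mathbf{U}$ and TU games $v$ on $N$. $p$ satisfies conditional independence if $p_N(\pi)=p_{N\setminus B}(\pi\setminus\{B\})\sum_{\tau\in\Pi(N):B\in\tau}p_N(\tau)$ for all $N\subseteq\mathbf{U}$, $\pi\in\Pi(N)$, $B\in\pi$. *)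

(* Defs.v *)
From HB Require Import structures.
From mathcomp Require Import all_boot all_order all_algebra.
Set Implicit Arguments. Unset Strict Implicit. Unset Printing Implicit Defensive.
Import Order.TTheory GRing.Theory Num.Theory.
Local Open Scope ring_scope.

(* Partitions of N: P : {set {set U}} with mathcomp's [partition P N]
   (blocks nonempty, pairwise disjoint, union N); for N = set0 the only
   partition is set0, i.e. Pi(emptyset) = {emptyset}.
   A random partition is a map p : {set U} -> {set {set U}} -> R, where
   p N restricted to the partitions of N is a probability distribution. *)

Section Defs.
Variables (R : realFieldType) (U : finType).

Definition is_random_partition (p : {set U} -> {set {set U}} -> R) : Prop :=
  forall N : {set U},
    (forall P : {set {set U}}, partition P N -> 0 <= p N P) /\
    \sum_(P : {set {set U}} | partition P N) p N P = 1.

(* A TU game on N: v : {set U} -> R with v set0 = 0 (only its values on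
   subsets of N matter). *)
Definition Pot (N : {set U}) (v : {set U} -> R) : R :=
  \sum_(S in powerset N | S != set0)
     (((#|S|.-1)`! * (#|N| - #|S|)`!)%N%:R / (#|N|`!)%:R) * v S.

Definition generates_potential (p : {set U} -> {set {set U}} -> R) : Prop :=
  forall (N : {set U}) (v : {set U} -> R), v set0 = 0 ->
    \sum_(P : {set {set U}} | partition P N) p N P * (\sum_(B in P) v B)
      = Pot N v.

Definition conditional_independence (p : {set U} -> {set {set U}} -> R)
  : Prop :=
  forall (N : {set U}) (P : {set {set U}}) (B : {set U}),
    partition P N -> B \in P ->
    p N P = p (N :\: B) (P :\ B) *
            \sum_(T : {set {set U}} | partition T N && (B \in T)) p N T.

Definition ewens (N : {set U}) (P : {set {set U}}) : R :=
  (\prod_(B in P) ((#|B|.-1)`!)%N%:R) / (#|N|`!)%:R.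

End Defs.

(* Main.v *)
Require Import Defs.
From HB Require Import structures.
From mathcomp Require Import all_boot all_order all_algebra.
From mathcomp Require Import zify ring.
Set Implicit Arguments. Unset Strict Implicit. Unset Printing Implicit Defensive.
Import Order.TTheory GRing.Theory Num.Theory.

Section Comb.
Variable U : finType.
Implicit Types (N B A M : {set U}) (T : {set {set U}}).

Lemma notin_part T N B : B != set0 -> partition T (N :\: B) -> B \notin T.
Proof.
move=> B0 pT; apply/negP => BT.
have := partitionS pT BT; case/set0Pn: B0 => y yB /subsetP /(_ y yB).
by rewrite inE yB.
Qed.

Lemma big_part_block (R : Type) (idx : R) (op : Monoid.com_law idx) N B
   (F : {set {set U}} -> R) :
  B != set0 -> B \subset N ->
  \big[op/idx]_(T | partition T N && (B \in T)) F T =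
  \big[op/idx]_(T | partition T (N :\: B)) F (B |: T).
Proof.
move=> B0 BN.
rewrite (reindex_onto (fun T => B |: T) (fun T => T :\ B)) /=; last first.
  by move=> T /andP[_ BT]; rewrite setD1K.
apply: eq_bigl => T; apply/idP/idP.
  case/andP => /andP[pBT _] /eqP e; rewrite -e.
  by apply: partitionD1 pBT (setU11 _ _).
move=> pT; have BnT := notin_part B0 pT.
rewrite setU11 setU1K // eqxx andbT.
have -> : N = B :|: (N :\: B).
  apply/setP => y; rewrite !inE; case yB: (y \in B) => //=.
  by rewrite (subsetP BN y yB).
rewrite andbT; apply: partitionU1 pT B0 _.
by rewrite disjoints_subset; apply/subsetP => y yB; rewrite !inE yB.
Qed.

Definition cnt N := (\sum_(T | partition T N) \prod_(C in T) (#|C|.-1)`!)%N.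

Lemma sub_ident M :
  (\sum_(A : {set U} | A \subset M) #|A|`! * (#|M| - #|A|)`!)%N = (#|M|.+1)`!.
Proof.
set m := #|M|.
have -> : (\sum_(A : {set U} | A \subset M) #|A|`! * (m - #|A|)`!)%N =
   (\sum_(A : {set U} | A \subset M) \sum_(k < m.+1 | #|A| == k) k`! * (m - k)`!)%N.
  apply: eq_bigr => A AM.
  have Am : #|A| < m.+1 by rewrite ltnS subset_leq_card.
  by rewrite (big_pred1 (Ordinal Am)) //=.
have -> : (\sum_(A : {set U} | A \subset M) \sum_(k < m.+1 | #|A| == k) k`! * (m - k)`!)%N
   = (\sum_(k < m.+1) \sum_(A : {set U} | (A \subset M) && (#|A| == k)) k`! * (m - k)`!)%N.
  exact: (exchange_big_dep xpredT).
rewrite (eq_bigr (fun _ => m`!)); last first.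
  move=> k _.
  rewrite (eq_bigl (fun A => A \in [set A : {set U} | A \subset M & #|A| == k])); last first.
    by move=> A /=; rewrite inE.
  by rewrite sum_nat_const cards_draws bin_fact // -ltnS.
by rewrite sum_nat_const card_ord factS.
Qed.


Lemma sub_ident1 N x : x \in N ->
  (\sum_(A : {set U} | (A \subset N) && (x \in A)) (#|A|.-1)`! * (#|N| - #|A|)`!)%N
  = #|N|`!.
Proof.
move=> xN.
rewrite (reindex_onto (fun A => x |: A) (fun A => A :\ x)) /=; last first.
  by move=> A /andP[_ xA]; rewrite setD1K.
rewrite (eq_bigl (fun A => A \subset N :\ x)); last first.
  move=> A /=; rewrite setU11 andbT subUset sub1set xN /=.
  case: (boolP (x \in A)) => xA.
    have -> : ((x |: A) :\ x == A) = false.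
      apply: negbTE; apply/negP => /eqP e; move: xA; rewrite -e !inE eqxx //.
    rewrite andbF; apply/esym; apply: negbTE; apply/negP => /subsetP /(_ x xA); rewrite !inE eqxx //.
  rewrite setU1K // eqxx andbT; apply/idP/idP => [AN|/subsetP AN].
    apply/subsetP => y yA; rewrite !inE (subsetP AN y yA) andbT.
    by apply: contraNneq xA => <-.
  by apply/subsetP => y /AN; rewrite inE => /andP[].
rewrite (eq_bigr (fun A => #|A|`! * (#|N :\ x| - #|A|)`!)%N); last first.
  move=> A AN.
  have xA : x \notin A by apply/negP => /(subsetP AN); rewrite !inE eqxx.
  by rewrite cardsU1 xA add1n /= (cardsD1 x N) xN add1n subSS.
by rewrite sub_ident (cardsD1 x N) xN.
Qed.

Lemma cntE N : cnt N = #|N|`!.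
Proof.
have [n] := ubnP #|N|; elim: n N => // n IH N.
rewrite ltnS => Nn.
case: (set_0Vmem N) => [->|[x xN]].
  rewrite /cnt (eq_bigl (pred1 set0)) => [|T]; last by rewrite /= partition_set0.
  by rewrite big_pred1_eq big_set0 cards0.
rewrite /cnt.
transitivity (\sum_(T | partition T N) \sum_(A : {set U} | (A \in T) && (x \in A))
   \prod_(C in T) (#|C|.-1)`!)%N.
  apply: eq_bigr => T pT.
  have tT := partition_trivIset pT.
  have cT : x \in cover T by rewrite (cover_partition pT).
  rewrite [RHS](big_pred1 (pblock T x)) // => A /=.
  apply/andP/eqP => [[AT xA]|->]; first by rewrite (def_pblock tT AT xA).
  by rewrite pblock_mem // mem_pblock.
have -> : (\sum_(T | partition T N) \sum_(A : {set U} | (A \in T) && (x \in A))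
   \prod_(C in T) (#|C|.-1)`!)%N =
  (\sum_(A : {set U} | (A \subset N) && (x \in A))
   \sum_(T | partition T N && ((A \in T) && (x \in A))) \prod_(C in T) (#|C|.-1)`!)%N.
  apply: exchange_big_dep => T A pT /andP[AT xA].
  by rewrite xA (partitionS pT AT).
rewrite -(sub_ident1 xN); apply: eq_bigr => A /andP[AN xA].
rewrite (eq_bigl (fun T => partition T N && (A \in T))) => [|T]; last by rewrite xA andbT.
have A0 : A != set0 by apply/set0Pn; exists x.
rewrite big_part_block //.
rewrite (eq_bigr (fun T => (#|A|.-1)`! * \prod_(C in T) (#|C|.-1)`!)%N); last first.
  by move=> T pT; rewrite big_setU1 //= (notin_part A0 pT).
rewrite -big_distrr /= -/(cnt (N :\: A)) IH; rewrite cardsD (setIidPr AN) //.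
have : 0 < #|A| by rewrite card_gt0.
have : (0 < #|N|)%N by apply/card_gt0P; exists x.
lia.
Qed.

End Comb.


Local Open Scope ring_scope.

Section RPart.
Variables (R : realFieldType) (U : finType).
Implicit Types (N B A M : {set U}) (T P : {set {set U}}).

Lemma fact_neq0 n : (n`!)%:R != 0 :> R.
Proof. by rewrite pnatr_eq0 -lt0n fact_gt0. Qed.

Lemma cntR M :
  \sum_(T | partition T M) \prod_(C in T) ((#|C|.-1)`!)%:R = (#|M|`!)%:R :> R.
Proof.
rewrite -(cntE M) /cnt natr_sum; apply: eq_bigr => T _.
by rewrite natr_prod.
Qed.

Definition coef N B : R :=
  ((#|B|.-1)`! * (#|N| - #|B|)`!)%N%:R / (#|N|`!)%:R.

Lemma blockR N B : B != set0 -> B \subset N ->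
  \sum_(T | partition T N && (B \in T)) ewens R N T = coef N B.
Proof.
move=> B0 BN; rewrite /ewens -big_distrl /= big_part_block //.
rewrite (eq_bigr (fun T => ((#|B|.-1)`!)%:R * \prod_(C in T) ((#|C|.-1)`!)%:R)); last first.
  by move=> T pT; rewrite big_setU1 //= (notin_part B0 pT).
by rewrite -big_distrr /= cntR cardsD (setIidPr BN) /coef natrM.
Qed.

Lemma ewens_split N P B : partition P N -> B \in P ->
  ewens R N P = ewens R (N :\: B) (P :\ B) * coef N B.
Proof.
move=> pP BP.
rewrite /ewens /coef (big_setD1 _ BP) /= cardsD (setIidPr (partitionS pP BP)) natrM.
have h1 := fact_neq0 #|N|; have h2 := fact_neq0 (#|N| - #|B|).
field.
by rewrite h1 h2.
Qed.

End RPart.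

Theorem proposition3 (R : realFieldType) (U : finType) :
  (is_random_partition (@ewens R U) /\
   generates_potential (@ewens R U) /\
   conditional_independence (@ewens R U)) /\
  (forall p : {set U} -> {set {set U}} -> R,
     is_random_partition p -> generates_potential p ->
     conditional_independence p ->
     forall (N : {set U}) (P : {set {set U}}),
       partition P N -> p N P = ewens R N P).
Proof.
split.
  split; [|split].
  - move=> N; split.
      move=> P _; rewrite /ewens divr_ge0 ?ler0n //.
      by apply: prodr_ge0 => *; rewrite ler0n.
    by rewrite /ewens -big_distrl /= cntR divff // fact_neq0.
  - move=> N v v0.
    rewrite (eq_bigr (fun P : {set {set U}} => \sum_(B : {set U} | B \in P) ewens R N P * v B)); last first.
      by move=> P _; rewrite big_distrr.
    have -> : \sum_(P : {set {set U}} | partition P N) \sum_(B in P) ewens R N P * v B =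
       \sum_(B : {set U} | (B \in powerset N) && (B != set0))
         \sum_(P : {set {set U}} | partition P N && (B \in P)) ewens R N P * v B.
      apply: exchange_big_dep => P B pP BP.
      by rewrite powersetE (partitionS pP BP) (partition_neq0 pP BP).
    rewrite /Pot; apply: eq_bigr => B /andP[BN B0].
    by rewrite -big_distrl /= blockR // -powersetE.
  - move=> N P B pP BP.
    rewrite blockR ?(partition_neq0 pP BP) ?(partitionS pP BP) //; exact: ewens_split.
move=> p rp gp ci.
have step1 : forall N S : {set U}, S != set0 -> S \subset N ->
    \sum_(T | partition T N && (S \in T)) p N T = coef R N S.
  move=> N S S0 SN.
  have H := gp N (fun B => if B == S then 1 else 0).
  have /H {H} : (if set0 == S then 1 else 0) = 0 :> R by rewrite eq_sym (negbTE S0).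
  rewrite (eq_bigr (fun T : {set {set U}} => if S \in T then p N T else 0)); last first.
    move=> T _; rewrite -big_mkcondr /=.
    case: (boolP (S \in T)) => ST.
      rewrite (big_pred1 S) ?mulr1 // => B /=.
      by case: eqP => [->|_]; rewrite ?ST ?andbF.
    rewrite big_pred0 ?mulr0 // => B.
    by case: eqP => [->|_]; rewrite ?(negbTE ST) ?andbF.
  rewrite -big_mkcondr /= => ->.
  rewrite /Pot (bigD1 S) /=; last by rewrite powersetE SN S0.
  rewrite eqxx mulr1 big1 ?addr0 // => B /andP[_ BS].
  by rewrite (negbTE BS) mulr0.
move=> N P.
have [n] := ubnP #|N|; elim: n N P => // n IH N P.
rewrite ltnS => Nn pP.
case: (set_0Vmem N) => [N0|[x xN]].
  subst N; move: pP; rewrite partition_set0 => /eqP ->.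
  have [_ s1] := rp set0.
  rewrite (eq_bigl (pred1 set0)) in s1; last by move=> T; rewrite /= partition_set0.
  rewrite big_pred1_eq in s1.
  by rewrite s1 /ewens big_set0 cards0 /= divr1.
have cP : x \in cover P by rewrite (cover_partition pP).
have BP := pblock_mem cP.
set B := pblock P x in BP *.
have B0 := partition_neq0 pP BP; have BN := partitionS pP BP.
rewrite (ci N P B pP BP) (step1 N B) // IH ?(partitionD1 pP BP) -?ewens_split //.
rewrite cardsD (setIidPr BN).
have : (0 < #|B|)%N by rewrite card_gt0.
have : (0 < #|N|)%N by apply/card_gt0P; exists x.
lia.
Qed.
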